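(* Let $f:\Sigma^*\to\Sigma^*$ be a sequential transduction. Then $f$ is $\mathcal{A}p$-sequential if and only if $f$ is $\mathcal{A}p$-rational.
   Context: A congruence $\sim$ on $\Sigma^*$ is aperiodic if there is $n$ with $w^n\sim w^{n+1}$ for all words $w$; $\mathcal{A}p(\Sigma)$ is the set of aperiodic congruences of finite index. For an automaton $\mathcal A=(Q,\Delta,I,F)$, its transition congruence is $u\approx_{\mathcal A}v$ iff for all $p,q\in Q$, there is a run on $u$ from $p$ to $q$ iff there is one on $v$; $\mathcal A$ is aperiodic if $\approx_{\mathcal A}$ is aperiodic. A transducer $\mathcal T=(\mathcal A,o,i,t)$ consists of an automaton $\mathcal A$, outputs $o:\Delta\to\Sigma^*$, initial outputs $i:I\to\Sigma^*$ and final outputs $t:F\to\Sigma^*$, realizing the pairs $(u,i(q_0)\,o(\text{run})\,t(q_n))$ for accepting runs on $u$; it is functional if this relation is a partial function and sequential if $\mathcal A$ is deterministic. A transduction is sequential if realized by a sequential transducer, $\mathcal{A}p$-rational if realized by a functional transducer with aperiodic underlying automaton, and $\mathcal{A}p$-sequential if realized by a sequential transducer with aperiodic underlying automaton. *)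

(* Defs.v *)
From mathcomp Require Import all_boot.
Set Implicit Arguments. Unset Strict Implicit. Unset Printing Implicit Defensive.

(* The underlying automaton is (delta, init, fin); the output
   of a transition (p,a,q) is out p a q (only meaningful when (p,a,q) is in
   delta, since runs only use transitions of delta). *)
Record transducer (Sigma Q : finType) := Transducer {
  delta : {set Q * Sigma * Q};
  init  : {set Q};
  fin   : {set Q};
  out   : Q -> Sigma -> Q -> seq Sigma;
  iout  : Q -> seq Sigma;
  tout  : Q -> seq Sigma
}.

Section Defs.
Variables (Sigma Q : finType).

Fixpoint has_run (d : {set Q * Sigma * Q}) (p : Q) (u : seq Sigma) (q : Q) : Prop :=
  match u with
  | [::] => p = q
  | a :: u' => exists p', (p, a, p') \in d /\ has_run d p' u' q
  end.

Definition trans_congr (d : {set Q * Sigma * Q}) (u v : seq Sigma) : Prop :=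
  forall p q : Q, has_run d p u q <-> has_run d p v q.

Definition wpow (w : seq Sigma) (n : nat) : seq Sigma := flatten (nseq n w).

Definition aperiodic_congr (c : seq Sigma -> seq Sigma -> Prop) : Prop :=
  exists n : nat, forall w : seq Sigma, c (wpow w n) (wpow w n.+1).

Definition aperiodic_trans (T : transducer Sigma Q) : Prop :=
  aperiodic_congr (trans_congr (delta T)).

Definition deterministic (T : transducer Sigma Q) : Prop :=
  (#|init T| <= 1) /\
  (forall p a q1 q2, (p, a, q1) \in delta T -> (p, a, q2) \in delta T -> q1 = q2).

Fixpoint run_out (T : transducer Sigma Q) (p : Q) (u : seq Sigma) (q : Q)
    (w : seq Sigma) : Prop :=
  match u with
  | [::] => p = q /\ w = [::]
  | a :: u' => exists p' w', (p, a, p') \in delta T /\ w = out T p a p' ++ w'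
                              /\ run_out T p' u' q w'
  end.

Definition realizes_rel (T : transducer Sigma Q) (u v : seq Sigma) : Prop :=
  exists q0 qn w, q0 \in init T /\ qn \in fin T /\ run_out T q0 u qn w /\
                  v = iout T q0 ++ w ++ tout T qn.

Definition functional (T : transducer Sigma Q) : Prop :=
  forall u v1 v2, realizes_rel T u v1 -> realizes_rel T u v2 -> v1 = v2.

End Defs.

(* a (partial) transduction f : Sigma^* -> Sigma^* , None = undefined *)
Definition realizes (Sigma Q : finType) (T : transducer Sigma Q)
    (f : seq Sigma -> option (seq Sigma)) : Prop :=
  forall u v, f u = Some v <-> realizes_rel T u v.

Definition sequential_fun (Sigma : finType) (f : seq Sigma -> option (seq Sigma)) : Prop :=
  exists (Q : finType) (T : transducer Sigma Q), deterministic T /\ realizes T f.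

Definition Ap_rational (Sigma : finType) (f : seq Sigma -> option (seq Sigma)) : Prop :=
  exists (Q : finType) (T : transducer Sigma Q),
    functional T /\ aperiodic_trans T /\ realizes T f.

Definition Ap_sequential (Sigma : finType) (f : seq Sigma -> option (seq Sigma)) : Prop :=
  exists (Q : finType) (T : transducer Sigma Q),
    deterministic T /\ aperiodic_trans T /\ realizes T f.

(* Main.v *)
Require Import Defs.
From mathcomp Require Import all_boot zify.
From Stdlib Require Import Classical ClassicalEpsilon.
Set Implicit Arguments. Unset Strict Implicit. Unset Printing Implicit Defensive.

Lemma catIs' (S : Type) (a b c : seq S) : a ++ c = b ++ c -> a = b.
Proof.
move=> H. have Hs : size a = size b by move: (congr1 size H); rewrite !size_cat; lia.
by rewrite -(take_size_cat c (erefl (size a))) H take_size_cat.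
Qed.

Definition decP (P : Prop) : bool := if excluded_middle_informative P then true else false.
Lemma decPP (P : Prop) : reflect P (decP P).
Proof. rewrite /decP; case: excluded_middle_informative => h; by constructor. Qed.

Section Words.
Variable S : finType.
Implicit Types (a b w p s t X Y r L : seq S).

Lemma wpowS w n : wpow w n.+1 = w ++ wpow w n. Proof. by []. Qed.
Lemma wpow0 w : wpow w 0 = [::]. Proof. by []. Qed.
Lemma wpowD w m n : wpow w (m + n) = wpow w m ++ wpow w n.
Proof. elim: m => [|m IH] //=. by rewrite addSn wpowS IH catA. Qed.
Lemma size_wpow w n : size (wpow w n) = n * size w.
Proof. elim: n => [|n IH] //=. rewrite wpowS size_cat IH mulSn. done. Qed.
Lemma wpow_nil n : @wpow S [::] n = [::].
Proof. by elim: n. Qed.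
Lemma wpow_comm X Y r n : X ++ r = r ++ Y -> wpow X n ++ r = r ++ wpow Y n.
Proof.
move=> H; elim: n => [|n IH]; first by rewrite /= cats0.
by rewrite !wpowS -catA IH catA H catA.
Qed.

Fixpoint lcp2 a b : seq S :=
  match a, b with
  | x :: a', y :: b' => if x == y then x :: lcp2 a' b' else [::]
  | _, _ => [::]
  end.

Lemma lcp2_prefl a b : prefix (lcp2 a b) a.
Proof. elim: a b => [|x a IH] [|y b] //=; case: eqP => _ //=; by rewrite eqxx IH. Qed.
Lemma lcp2_prefr a b : prefix (lcp2 a b) b.
Proof. elim: a b => [|x a IH] [|y b] //=; case: eqP => [->|] //=; by rewrite eqxx IH. Qed.
Lemma lcp2_max p a b : prefix p a -> prefix p b -> prefix p (lcp2 a b).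
Proof.
elim: p a b => [|z p IH] [|x a] [|y b] //=.
- by move=> _ _; case: (x == y).
- move=> /andP [/eqP Hz Ha] /andP [/eqP Hz' Hb]; subst.
  rewrite eqxx /= eqxx. exact: IH.
Qed.
Lemma lcp2_cat L a b : lcp2 (L ++ a) (L ++ b) = L ++ lcp2 a b.
Proof. elim: L => [|x L IH] //=; by rewrite eqxx IH. Qed.

Fixpoint lcps (l : seq (seq S)) : seq S :=
  match l with
  | [::] => [::]
  | s :: l' => if l' is [::] then s else lcp2 s (lcps l')
  end.

Lemma lcps_prefix l s : s \in l -> prefix (lcps l) s.
Proof.
elim: l => [|t l IH] //=. rewrite in_cons; case/orP => [/eqP ->|Hs].
- case: l {IH} => [|u l]; [exact: prefix_refl | exact: lcp2_prefl].
- case: l IH Hs => [|u l] IH Hs //=. apply: prefix_trans (lcp2_prefr _ _) (IH Hs).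
Qed.

Lemma lcps_max l p : l != [::] -> (forall s, s \in l -> prefix p s) -> prefix p (lcps l).
Proof.
elim: l => [|t l IH] // _ H /=.
case: l IH H => [|u l] IH H; first by apply: H; rewrite mem_head.
apply: lcp2_max; first by apply: H; rewrite mem_head.
apply: IH => // s Hs; apply: H; by rewrite in_cons Hs orbT.
Qed.

Lemma lcps_cat L l : l != [::] -> lcps (map (cat L) l) = L ++ lcps l.
Proof.
elim: l => [|t l IH] //= _. case: l IH => [|u l] IH //=.
move: IH => /= -> //. exact: lcp2_cat.
Qed.

Lemma prefix_cat_drop p s : prefix p s -> p ++ drop (size p) s = s.
Proof. by case/prefixP=> r ->; rewrite drop_size_cat. Qed.

Lemma prefix_size p s : prefix p s -> size p <= size s.
Proof. by case/prefixP=> r ->; rewrite size_cat leq_addr. Qed.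

Lemma drop_catD a b k : drop (size a + k) (a ++ b) = drop k b.
Proof. by elim: a. Qed.

Lemma take_catD a b k : take (size a + k) (a ++ b) = a ++ take k b.
Proof. by rewrite takeD take_size_cat // drop_size_cat. Qed.

Definition close (C : nat) a o := exists s t, size s <= C /\ size t <= C /\ a ++ s = o ++ t.

Lemma close_size C a o : close C a o -> size a <= size o + C /\ size o <= size a + C.
Proof. case=> s [t [Hs [Ht E]]]. move: (congr1 size E); rewrite !size_cat. lia. Qed.

Lemma close_take C a o k : close C a o -> k <= size a -> k <= size o -> take k a = take k o.
Proof. case=> s [t [_ [_ E]]] h1 h2. by rewrite -(takel_cat s h1) E takel_cat. Qed.

Lemma close_pair C a b o k : close C a o -> close C b o -> k + C + C <= size a ->
  take k a = take k b.
Proof.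
move=> Ha Hb hk. have [h1 h2] := close_size Ha. have [h3 h4] := close_size Hb.
rewrite (close_take Ha) ?(close_take Hb) //; lia.
Qed.

Lemma comp_cat a s b t : a ++ s = b ++ t -> size a <= size b -> prefix a b.
Proof.
move=> E h. rewrite prefixE. by rewrite -(takel_cat t h) -E take_size_cat.
Qed.

End Words.
Section CL.
Variable S : finType.
Implicit Types (a b s t X Y r L al be ga : seq S).

Lemma lin_le (x y a b : nat) : (forall c, c * a + x <= c * b + y) -> a <= b.
Proof.
move=> H. rewrite leqNgt; apply/negP => hlt.
have := H (x + y).+1. have : (x + y).+1 * b.+1 <= (x + y).+1 * a by rewrite leq_mul2l hlt orbT.
rewrite mulnS. lia.
Qed.

Lemma catsI' a b c : a ++ b = a ++ c -> b = c.
Proof. move/(congr1 (drop (size a))); by rewrite !drop_size_cat. Qed.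

Lemma CL C (al be ga al' be' ga' : seq S) :
  (forall c, exists o, close C (al ++ wpow be c ++ ga) o /\ close C (al' ++ wpow be' c ++ ga') o) ->
  size be = size be' /\ (be != [::] -> prefix al al' \/ prefix al' al) /\
  (forall r, al' = al ++ r -> be != [::] -> be ++ r = r ++ be').
Proof.
move=> H.
have Hsz : forall c, size (al ++ wpow be c ++ ga) <= size (al' ++ wpow be' c ++ ga') + C + C /\
                     size (al' ++ wpow be' c ++ ga') <= size (al ++ wpow be c ++ ga) + C + C.
  move=> c; have [o [H1 H2]] := H c. have := close_size H1; have := close_size H2. lia.
have Htk : forall c k, k + C + C <= size (al ++ wpow be c ++ ga) ->
    take k (al ++ wpow be c ++ ga) = take k (al' ++ wpow be' c ++ ga').
  move=> c k hk; have [o [H1 H2]] := H c. exact: close_pair H1 H2 hk.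
have Es : size be = size be'.
  apply/eqP; rewrite eqn_leq; apply/andP; split.
  - apply: (@lin_le (size al + size ga) (size al' + size ga' + C + C)) => c.
    have := (Hsz c).1. rewrite !size_cat !size_wpow. lia.
  - apply: (@lin_le (size al' + size ga') (size al + size ga + C + C)) => c.
    have := (Hsz c).2. rewrite !size_cat !size_wpow. lia.
split=> //.
have Hbig : forall c, be != [::] -> c <= size (al ++ wpow be c ++ ga).
  move=> c hb. rewrite !size_cat size_wpow. have : 0 < size be by rewrite lt0n size_eq0.
  move=> h. have : c <= c * size be by rewrite leq_pmulr. lia.
split.
- move=> hb. set c := size al + size al' + C + C.
  have E := Htk c (size al + size al') (leq_trans (leqnn _) (Hbig c hb)).
  case: (leqP (size al) (size al')) => h.
  + left. rewrite prefixE. apply/eqP.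
    have E1 : take (size al) (take (size al + size al') (al ++ wpow be c ++ ga)) = al.
      by rewrite take_takel ?leq_addr // take_size_cat.
    have E2 : take (size al) (take (size al + size al') (al' ++ wpow be' c ++ ga')) = take (size al) al'.
      by rewrite take_takel ?leq_addr // takel_cat.
    by rewrite -E2 -E E1.
  + right. rewrite prefixE. apply/eqP.
    have E1 : take (size al') (take (size al + size al') (al' ++ wpow be' c ++ ga')) = al'.
      by rewrite take_takel ?leq_addl // take_size_cat.
    have E2 : take (size al') (take (size al + size al') (al ++ wpow be c ++ ga)) = take (size al') al.
      rewrite take_takel ?leq_addl // takel_cat //. exact: ltnW.
    by rewrite -E2 E E1.
- move=> r Er hb. subst al'. set c := size al + size r + size be + C + C.
  set X := wpow be c ++ ga.
  have hk1 : size al + size r + C + C <= size (al ++ wpow be c ++ ga).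
    apply: leq_trans (Hbig c hb); rewrite /c; lia.
  have h1 := Htk c _ hk1.
  rewrite -/X take_catD -catA take_catD (take_size_cat _ (erefl (size r))) in h1.
  have {}h1 := catsI' h1.
  have hk2 : size al + (size be + size r) + C + C <= size (al ++ wpow be c.+1 ++ ga).
    apply: leq_trans (Hbig c.+1 hb); rewrite /c; lia.
  have h2 := Htk c.+1 _ hk2.
  rewrite wpowS -catA -/X take_catD take_catD h1 in h2.
  rewrite -catA take_catD -catA addnC take_catD Es take_size_cat // in h2.
  exact: catsI' h2.
Qed.

End CL.
Section Runs.
Variables (Sigma Q : finType).
Implicit Types (d : {set Q * Sigma * Q}) (T : transducer Sigma Q) (u v w x y : seq Sigma).

Lemma has_run_cat d p u v q :
  has_run d p (u ++ v) q <-> exists r, has_run d p u r /\ has_run d r v q.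
Proof.
elim: u p => [|a u IH] p /=.
- split; [move=> H; by exists p | by case=> r [-> H]].
- split.
  + case=> p' [Hd /IH [r [H1 H2]]]. exists r; split=>//; by exists p'.
  + case=> r [[p' [Hd H1]] H2]. exists p'; split=>//; apply/IH; by exists r.
Qed.

Lemma run_out_cat T p u v q w :
  run_out T p (u ++ v) q w <->
  exists r w1 w2, run_out T p u r w1 /\ run_out T r v q w2 /\ w = w1 ++ w2.
Proof.
elim: u p w => [|a u IH] p w /=.
- split; [move=> H; by exists p, [::], w | by case=> r [w1 [w2 [[-> ->] [H ->]]]]].
- split.
  + case=> p' [w' [Hd [-> /IH [r [w1 [w2 [H1 [H2 ->]]]]]]]].
    exists r, (out T p a p' ++ w1), w2; split; last by rewrite catA.
    by exists p', w1.
  + case=> r [w1 [w2 [[p' [w' [Hd [-> H1]]]] [H2 ->]]]].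
    exists p', (w' ++ w2); split=>//; split; first by rewrite catA.
    apply/IH; by exists r, w', w2.
Qed.

Lemma has_runE T p u q : has_run (delta T) p u q <-> exists w, run_out T p u q w.
Proof.
elim: u p => [|a u IH] p /=.
- split; [move=> ->; by exists [::] | by case=> w [->]].
- split.
  + case=> p' [Hd /IH [w H]]. exists (out T p a p' ++ w), p', w; done.
  + case=> w [p' [w' [Hd [_ H]]]]. exists p'; split=>//; apply/IH; by exists w'.
Qed.

Lemma run_det T p u q1 q2 w1 w2 : deterministic T ->
  run_out T p u q1 w1 -> run_out T p u q2 w2 -> q1 = q2 /\ w1 = w2.
Proof.
case=> _ Hd. elim: u p w1 w2 => [|a u IH] p w1 w2 /=.
- by case=> <- -> [<- ->].
- case=> p1 [w1' [H1 [-> R1]]] [p2 [w2' [H2 [-> R2]]]].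
  have E := Hd _ _ _ _ H1 H2; subst p2.
  have [-> ->] := IH _ _ _ R1 R2; done.
Qed.

Lemma init_det T i1 i2 : deterministic T -> i1 \in init T -> i2 \in init T -> i1 = i2.
Proof. case=> /card_le1_eqP H _ h1 h2; exact: H. Qed.

Lemma det_functional T : deterministic T -> functional T.
Proof.
move=> Hd u v1 v2 [q0 [qn [w [H0 [Hn [R ->]]]]]] [q0' [qn' [w' [H0' [Hn' [R' ->]]]]]].
have E := init_det Hd H0 H0'; subst q0'.
have [-> ->] := run_det Hd R R'; done.
Qed.

Lemma has_run_pow_path d p u n q : has_run d p (wpow u n) q ->
  exists st : nat -> Q, st 0 = p /\ st n = q /\ forall i, i < n -> has_run d (st i) u (st i.+1).
Proof.
elim: n p => [|n IH] p /=.
- move=> ->; by exists (fun _ => q).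
- rewrite wpowS; case/has_run_cat=> r [H1 /IH [st [E0 [En Hi]]]].
  exists (fun i => if i is i'.+1 then st i' else p); split=>//; split=>//.
  case=> [|i] hi; first by rewrite E0.
  exact: Hi.
Qed.

Lemma path_run d u n (st : nat -> Q) : (forall i, i < n -> has_run d (st i) u (st i.+1)) ->
  forall i j, i <= j -> j <= n -> has_run d (st i) (wpow u (j - i)) (st j).
Proof.
move=> H i; elim=> [|j IH] hij hjn.
- have -> : i = 0 by lia. by rewrite subnn.
- case: (eqVneq i j.+1) => [->|hne]; first by rewrite subnn.
  have -> : j.+1 - i = (j - i) + 1 by lia.
  rewrite wpowD; apply/has_run_cat; exists (st j); split; first by apply: IH; lia.
  have -> : wpow u 1 = u by rewrite /wpow /= cats0.
  apply: H; lia.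
Qed.

Lemma has_run_loop_iter d s u k n : has_run d s (wpow u k) s -> has_run d s (wpow u (k * n)) s.
Proof.
move=> H; elim: n => [|n IH]; first by rewrite muln0.
rewrite mulnS wpowD; apply/has_run_cat; by exists s.
Qed.

Lemma run_loop_iter T s u k n L : run_out T s (wpow u k) s L ->
  run_out T s (wpow u (k * n)) s (wpow L n).
Proof.
move=> H; elim: n => [|n IH]; first by rewrite muln0.
rewrite mulnS wpowD wpowS; apply/run_out_cat; by exists s, L, (wpow L n).
Qed.

Lemma run_loop_cat T s u k1 k2 L1 L2 : run_out T s (wpow u k1) s L1 ->
  run_out T s (wpow u k2) s L2 -> run_out T s (wpow u (k1 + k2)) s (L1 ++ L2).
Proof. move=> H1 H2; rewrite wpowD; apply/run_out_cat; by exists s, L1, L2. Qed.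

Lemma tc_refl d u : trans_congr d u u. Proof. by []. Qed.
Lemma tc_sym d u v : trans_congr d u v -> trans_congr d v u.
Proof. move=> H p q; split; apply H. Qed.
Lemma tc_trans d u v w : trans_congr d u v -> trans_congr d v w -> trans_congr d u w.
Proof. move=> H1 H2 p q; split => h; [apply/H2/H1 | apply/H1/H2]; done. Qed.
Lemma tc_catl d x u v : trans_congr d u v -> trans_congr d (x ++ u) (x ++ v).
Proof.
move=> H p q; split; case/has_run_cat=> r [h1 h2]; apply/has_run_cat; exists r; split=>//; by apply/H.
Qed.
Lemma tc_catr d x u v : trans_congr d u v -> trans_congr d (u ++ x) (v ++ x).
Proof.
move=> H p q; split; case/has_run_cat=> r [h1 h2]; apply/has_run_cat; exists r; split=>//; by apply/H.
Qed.

Lemma tc_pow d N : (forall w, trans_congr d (wpow w N) (wpow w N.+1)) ->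
  forall w m, N <= m -> trans_congr d (wpow w m) (wpow w N).
Proof.
move=> H w m hm. have -> : m = N + (m - N) by lia.
elim: (m - N) => [|k IH]; first by rewrite addn0.
rewrite addnS wpowS. apply: tc_trans (tc_catl w IH) _.
rewrite -wpowS. exact: tc_sym.
Qed.

End Runs.
Section Main.
Variables (Sigma Q1 Q2 : finType) (T1 : transducer Sigma Q1) (T2 : transducer Sigma Q2)
  (f : seq Sigma -> option (seq Sigma)).
Hypotheses (D1 : deterministic T1) (R1 : realizes T1 f) (R2 : realizes T2 f).
Implicit Types (u v w x y z o : seq Sigma).

Lemma F2 : functional T2.
Proof. move=> u v1 v2 /R2 H1 /R2 H2. by move: H1; rewrite H2 => -[]. Qed.

Definition coacc (q : Q2) : Prop := exists w qf v, qf \in fin T2 /\ run_out T2 q w qf v.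
Definition reach x q o : Prop :=
  exists q0 w, q0 \in init T2 /\ run_out T2 q0 x q w /\ o = iout T2 q0 ++ w.
Definition Sb x : {set Q2} := [set q | decP (coacc q /\ exists o, reach x q o)].
Definition Rx x q : seq Sigma := epsilon (inhabits [::]) (reach x q).

Lemma inSb x q : q \in Sb x <-> coacc q /\ exists o, reach x q o.
Proof. rewrite inE; split; by move/decPP. Qed.

Lemma reach_fin x q o : reach x q o -> q \in fin T2 -> f x = Some (o ++ tout T2 q).
Proof.
case=> q0 [w [H0 [R ->]]] Hf. apply/R2. exists q0, q, w; split=>//; split=>//; split=>//.
by rewrite catA.
Qed.

Lemma fin_reach x v : f x = Some v -> exists q o, q \in fin T2 /\ reach x q o /\ v = o ++ tout T2 q.
Proof.
move/R2=> [q0 [qn [w [H0 [Hn [R ->]]]]]]. exists qn, (iout T2 q0 ++ w); split=>//; split.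
- by exists q0, w.
- by rewrite catA.
Qed.

Lemma reach_uniq x q o1 o2 : coacc q -> reach x q o1 -> reach x q o2 -> o1 = o2.
Proof.
case=> w [qf [v [Hf Rv]]] [q1 [w1 [H1 [Ru1 ->]]]] [q2 [w2 [H2 [Ru2 ->]]]].
have E : iout T2 q1 ++ (w1 ++ v) ++ tout T2 qf = iout T2 q2 ++ (w2 ++ v) ++ tout T2 qf.
  have Ha : realizes_rel T2 (x ++ w) (iout T2 q1 ++ (w1 ++ v) ++ tout T2 qf).
    exists q1, qf, (w1 ++ v); split=>//; split=>//; split=>//. apply/run_out_cat; by exists q, w1, v.
  have Hb : realizes_rel T2 (x ++ w) (iout T2 q2 ++ (w2 ++ v) ++ tout T2 qf).
    exists q2, qf, (w2 ++ v); split=>//; split=>//; split=>//. apply/run_out_cat; by exists q, w2, v.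
  exact: F2 Ha Hb.
move: E; rewrite -!catA => E. apply: (@catIs' _ _ _ (v ++ tout T2 qf)). by rewrite -!catA.
Qed.

Lemma Rx_reach x q : q \in Sb x -> reach x q (Rx x q).
Proof. case/inSb=> _ H. exact: epsilon_spec. Qed.

Lemma Rx_eq x q o : coacc q -> reach x q o -> Rx x q = o.
Proof. move=> Hc Hr. refine (reach_uniq Hc _ Hr). rewrite /Rx. apply: (epsilon_spec (inhabits [::]) (reach x q)); by exists o. Qed.

Lemma coacc_back p w q : has_run (delta T2) p w q -> coacc q -> coacc p.
Proof.
case/has_runE=> o1 Ro [w' [qf [v [Hf Rv]]]]. exists (w ++ w'), qf, (o1 ++ v); split=>//.
apply/run_out_cat; by exists q, o1, v.
Qed.

Lemma reach_cat x z q o : reach (x ++ z) q o <->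
  exists r o1 o2, reach x r o1 /\ run_out T2 r z q o2 /\ o = o1 ++ o2.
Proof.
split.
- case=> q0 [w [H0 [/run_out_cat [r [w1 [w2 [Ra [Rb ->]]]]] ->]]].
  exists r, (iout T2 q0 ++ w1), w2; split; [by exists q0, w1 | split=>//; by rewrite catA].
- case=> r [o1 [o2 [[q0 [w1 [H0 [Ra ->]]]] [Rb ->]]]].
  exists q0, (w1 ++ o2); split=>//; split; last by rewrite catA.
  apply/run_out_cat; by exists r, w1, o2.
Qed.

Lemma reach_has x q o : reach x q o -> exists q0, q0 \in init T2 /\ has_run (delta T2) q0 x q.
Proof. case=> q0 [w [H0 [R _]]]; exists q0; split=>//; apply/has_runE; by exists w. Qed.

Lemma has_reach x q q0 : q0 \in init T2 -> has_run (delta T2) q0 x q -> exists o, reach x q o.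
Proof. move=> H0 /has_runE [w R]; exists (iout T2 q0 ++ w), q0, w; done. Qed.

Definition PW q w := exists qf v, qf \in fin T2 /\ run_out T2 q w qf v.
Definition wq q : seq Sigma := epsilon (inhabits [::]) (PW q).
Definition PG2 q g := exists qf v, qf \in fin T2 /\ run_out T2 q (wq q) qf v /\ g = v ++ tout T2 qf.
Definition g2 q : seq Sigma := epsilon (inhabits [::]) (PG2 q).
Definition PG1 p q g := exists qf v, qf \in fin T1 /\ run_out T1 p (wq q) qf v /\ g = v ++ tout T1 qf.
Definition G1 p q : seq Sigma := epsilon (inhabits [::]) (PG1 p q).
Definition C := \max_(p : Q1) \max_(q : Q2) (size (G1 p q) + size (g2 q)).

Definition T1pre x o := exists i1 p w1, i1 \in init T1 /\ run_out T1 i1 x p w1 /\ o = iout T1 i1 ++ w1.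

Lemma T1pre_uniq x o1 o2 : T1pre x o1 -> T1pre x o2 -> o1 = o2.
Proof.
case=> i1 [p1 [w1 [H1 [Ra ->]]]] [i2 [p2 [w2 [H2 [Rb ->]]]]].
have E := init_det D1 H1 H2; subst i2. have [_ ->] := run_det D1 Ra Rb; done.
Qed.

Lemma closeT1 x q o : coacc q -> reach x q o -> exists o1, T1pre x o1 /\ close C o o1.
Proof.
move=> Hc Hr.
have Hw : PW q (wq q).
  have [w Hw] := Hc. apply: epsilon_spec. by exists w.
have [qf [v [Hf [Rv Eg]]]] : PG2 q (g2 q).
  apply: epsilon_spec.
  case: Hw => qf [v [Hf Rv]]; by exists (v ++ tout T2 qf), qf, v.
have Hfx : f (x ++ wq q) = Some (o ++ g2 q).
  rewrite Eg catA. apply: reach_fin Hf. apply/reach_cat; by exists q, o, v.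
case/R1: Hfx => i1 [qn [W [H1 [Hn [RW EW]]]]].
case/run_out_cat: RW => p [w1 [w2 [Ra [Rb EW2]]]].
exists (iout T1 i1 ++ w1); split; first by exists i1, p, w1.
have [qf' [v' [Hf' [Rv' EG]]]] : PG1 p q (G1 p q).
  apply: epsilon_spec.
  by exists (w2 ++ tout T1 qn), qn, w2.
have [Eq Ev] := run_det D1 Rv' Rb; subst qf' v'.
exists (g2 q), (G1 p q); split; last split.
- apply: leq_trans (leq_bigmax p). apply: leq_trans (leq_bigmax q). by rewrite leq_addl.
- apply: leq_trans (leq_bigmax p). apply: leq_trans (leq_bigmax q). by rewrite leq_addr.
- by rewrite EW EW2 EG -!catA.
Qed.

Definition Lx x : seq Sigma := lcps [seq Rx x q | q <- enum (Sb x)].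

Lemma Lx_prefix x q : q \in Sb x -> prefix (Lx x) (Rx x q).
Proof. move=> H; apply: lcps_prefix; apply: map_f; by rewrite mem_enum. Qed.

Lemma Lx_nonempty x q : q \in Sb x -> [seq Rx x q | q <- enum (Sb x)] != [::].
Proof. move=> Hq; apply/eqP => E. have : Rx x q \in [seq Rx x q | q <- enum (Sb x)] by apply: map_f; rewrite mem_enum. by rewrite E. Qed.

Lemma D_bound x q : q \in Sb x -> size (drop (size (Lx x)) (Rx x q)) <= C + C.
Proof.
move=> Hq. have [Hc [o Hr]] := (inSb x q).1 Hq.
have [o1 [P1 Cl]] := closeT1 Hc (Rx_reach Hq).
have Hall : forall q', q' \in Sb x -> close C (Rx x q') o1.
  move=> q' Hq'. have [Hc' _] := (inSb x q').1 Hq'.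
  have [o2 [P2 Cl2]] := closeT1 Hc' (Rx_reach Hq').
  by rewrite (T1pre_uniq P1 P2).
set k0 := size o1 - C.
have Hpre : prefix (take k0 o1) (Lx x).
  apply: lcps_max; first exact: Lx_nonempty Hq.
  move=> s /mapP [q' Hq' ->]. rewrite mem_enum in Hq'.
  have Cq := Hall q' Hq'. have [h1 h2] := close_size Cq.
  rewrite prefixE size_take.
  have hk : k0 <= size o1 by rewrite /k0 leq_subr.
  have -> : (if k0 < size o1 then k0 else size o1) = k0 by case: ltnP => h //; lia.
  rewrite (close_take Cq) //; lia.
have Hs := prefix_size Hpre. rewrite size_take in Hs.
have [h1 h2] := close_size (Hall q Hq).
rewrite size_drop. move: Hs; case: ltnP => h Hs; lia.
Qed.

Definition K := C + C.
Definition St := {ffun Q2 -> option (K.-bseq Sigma)}.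
Definition Dx x : St := [ffun q => if q \in Sb x then
   Some (insub_bseq K (drop (size (Lx x)) (Rx x q))) else None].
Definition dv (D : St) q : seq Sigma := if D q is Some b then bseqval b else [::].
Definition coaccb q := decP (coacc q).
Definition predq (D : St) a q' : option Q2 := [pick q | (D q != None) && ((q, a, q') \in delta T2)].
Definition Sstep (D : St) a : {set Q2} := [set q' | coaccb q' && (predq D a q' != None)].
Definition Ea (D : St) a q' : seq Sigma :=
  if predq D a q' is Some q then dv D q ++ out T2 q a q' else [::].
Definition stepout (D : St) a := lcps [seq Ea D a q' | q' <- enum (Sstep D a)].
Definition step (D : St) a : St := [ffun q' => if q' \in Sstep D a then
   Some (insub_bseq K (drop (size (stepout D a)) (Ea D a q'))) else None].

Lemma Dx_some x q : (Dx x q != None) = (q \in Sb x).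
Proof. rewrite ffunE; by case: ifP. Qed.

Lemma dv_Dx x q : q \in Sb x -> dv (Dx x) q = drop (size (Lx x)) (Rx x q).
Proof.
move=> Hq; rewrite /dv ffunE Hq /insub_bseq val_insubd.
by have := D_bound Hq; rewrite /K => ->.
Qed.

Lemma Rx_split x q : q \in Sb x -> Rx x q = Lx x ++ dv (Dx x) q.
Proof. move=> Hq; rewrite dv_Dx // prefix_cat_drop //; exact: Lx_prefix. Qed.

Lemma run1 p a q o : run_out T2 p [:: a] q o <-> (p, a, q) \in delta T2 /\ o = out T2 p a q.
Proof.
split.
- case=> p' [w' [H [Eo [Ep Ew]]]]; subst; by rewrite cats0.
- case=> H ->; exists q, [::]; by rewrite cats0.
Qed.

Lemma Sb_step x a : Sb (x ++ [:: a]) = Sstep (Dx x) a.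
Proof.
apply/setP=> q'. rewrite [in RHS]inE. apply/idP/idP.
- case/inSb=> Hc [o /reach_cat [r [o1 [o2 [Hr [/run1 [Ht _] _]]]]]].
  have Hrc : coacc r.
    apply: (coacc_back (w:=[:: a])) Hc; apply/has_runE; exists (out T2 r a q'); by apply/run1.
  have HrS : r \in Sb x by apply/inSb; split=>//; by exists o1.
  apply/andP; split; first by apply/decPP.
  rewrite /predq; case: pickP => // /(_ r); by rewrite Dx_some HrS Ht.
- case/andP=> /decPP Hc; rewrite /predq; case: pickP => // q /andP [Hq Ht] _.
  rewrite Dx_some in Hq. apply/inSb; split=>//.
  exists (Rx x q ++ out T2 q a q'). apply/reach_cat; exists q, (Rx x q), (out T2 q a q').
  split; first exact: Rx_reach. split=>//. exact/run1.
Qed.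

Lemma Rx_step x a q' : q' \in Sb (x ++ [:: a]) -> Rx (x ++ [:: a]) q' = Lx x ++ Ea (Dx x) a q'.
Proof.
move=> Hq'. have [Hc _] := (inSb _ q').1 Hq'.
move: Hq'; rewrite Sb_step inE => /andP [_]. rewrite /Ea /predq.
case: pickP => // q /andP [Hq Ht] _. rewrite Dx_some in Hq.
rewrite catA -Rx_split //. apply: Rx_eq Hc _.
apply/reach_cat; exists q, (Rx x q), (out T2 q a q'). split; first exact: Rx_reach. split=>//. exact/run1.
Qed.

Lemma Lx_step x a q' : q' \in Sb (x ++ [:: a]) -> Lx (x ++ [:: a]) = Lx x ++ stepout (Dx x) a.
Proof.
move=> Hq'. rewrite [Lx (x ++ _)]/Lx /stepout. rewrite -lcps_cat; last first.
  apply/eqP => E. have : Ea (Dx x) a q' \in [seq Ea (Dx x) a q' | q' <- enum (Sstep (Dx x) a)].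
    by apply: map_f; rewrite mem_enum -Sb_step.
  by rewrite E.
rewrite -map_comp -Sb_step. congr lcps. apply/eq_in_map => p; rewrite mem_enum => Hp /=.
exact: Rx_step.
Qed.

Lemma Dx_step x a : Dx (x ++ [:: a]) = step (Dx x) a.
Proof.
apply/ffunP=> q'. rewrite !ffunE -Sb_step. case: ifP => H //.
by rewrite (Lx_step H) (Rx_step H) size_cat drop_catD.
Qed.

Lemma Sb_prefix x z q : q \in Sb (x ++ z) -> exists r, r \in Sb x.
Proof.
case/inSb=> Hc [o /reach_cat [r [o1 [o2 [Hr [Ro _]]]]]]. exists r; apply/inSb; split; last by exists o1.
apply: (coacc_back (w:=z)) Hc; apply/has_runE; by exists o2.
Qed.

Definition reachable (D : St) := decP (exists x, D = Dx x).
Definition pickf (D : St) := [pick q | (q \in fin T2) && (D q != None)].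

Definition Tn : transducer Sigma St := Transducer
  [set t : St * Sigma * St | reachable t.1.1 && (t.2 == step t.1.1 t.1.2)]
  [set Dx [::]]
  [set D : St | [exists q, (q \in fin T2) && (D q != None)]]
  (fun (D : St) a _ => stepout D a)
  (fun _ => Lx [::])
  (fun (D : St) => if pickf D is Some q then dv D q ++ tout T2 q else [::]).

Lemma Tn_det : deterministic Tn.
Proof.
split; first by rewrite cards1.
move=> p a q1 q2; rewrite !inE /= => /andP [_ /eqP ->] /andP [_ /eqP ->]; done.
Qed.

Lemma Tn_trans y a D : ((Dx y, a, D) \in delta Tn) = (D == Dx (y ++ [:: a])).
Proof.
rewrite inE /= Dx_step. have -> : reachable (Dx y) by apply/decPP; exists y. done.
Qed.

Lemma run_Tn y u D w : run_out Tn (Dx y) u D w ->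
  D = Dx (y ++ u) /\ forall q, q \in Sb (y ++ u) -> Lx (y ++ u) = Lx y ++ w.
Proof.
elim: u y w => [|a u IH] y w /=.
- case=> <- ->; rewrite !cats0; done.
- case=> p' [w' [Ht [-> R]]]. move: Ht; rewrite Tn_trans => /eqP Ep; subst p'.
  have [-> H] := IH _ _ R. rewrite -catA /=; split=>// q Hq.
  have Hq' : q \in Sb ((y ++ [:: a]) ++ u) by rewrite -catA.
  have := H q Hq'; rewrite -catA /= => ->. have [r Hr] := Sb_prefix Hq'.
  by rewrite (Lx_step Hr) catA.
Qed.

Lemma run_Tn_ex y u : exists w, run_out Tn (Dx y) u (Dx (y ++ u)) w.
Proof.
elim: u y => [|a u IH] y /=; first by exists [::]; rewrite cats0.
have [w R] := IH (y ++ [:: a]). rewrite -catA in R.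
exists (stepout (Dx y) a ++ w), (Dx (y ++ [:: a])), w; split; first by rewrite Tn_trans.
done.
Qed.

Lemma Tn_realizes : realizes Tn f.
Proof.
move=> u v; split.
- move=> Hf. have [qf [o [Hqf [Hr Ev]]]] := fin_reach Hf.
  have Hc : coacc qf by exists [::], qf, [::].
  have HqS : qf \in Sb u by apply/inSb; split=>//; by exists o.
  have [w R] := run_Tn_ex [::] u. have [_ HL] := run_Tn R.
  exists (Dx [::]), (Dx u), w; split; first by rewrite inE.
  split.
    rewrite inE; apply/existsP; exists qf; by rewrite Hqf Dx_some HqS.
  split=>//. rewrite /= /pickf. case: pickP => [q /andP [Hq Hn]|]; last by move/(_ qf); rewrite Hqf Dx_some HqS.
  rewrite Dx_some in Hn.
  have Hf' := reach_fin (Rx_reach Hn) Hq. rewrite Hf in Hf'. case: Hf' => ->.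
  by rewrite (Rx_split Hn) !catA -(HL qf HqS).
- case=> D0 [Dn [w [H0 [Hn [R ->]]]]]. move: H0; rewrite inE => /eqP E0; subst D0. move: R.
  move/run_Tn=> [ED HL]; subst Dn. move: Hn; rewrite inE => /existsP [q0 /andP [Hq0 Hn0]].
  rewrite /= /pickf. case: pickP => [q /andP [Hq Hn]|]; last by move/(_ q0); rewrite Hq0 Hn0.
  rewrite Dx_some in Hn. rewrite (reach_fin (Rx_reach Hn) Hq) (Rx_split Hn) (HL q Hn) /=.
  by rewrite !catA.
Qed.

Lemma Dx_eq x x' (L L' : seq Sigma) (tau : Q2 -> seq Sigma) : Sb x = Sb x' ->
  (forall q, q \in Sb x -> Rx x q = L ++ tau q /\ Rx x' q = L' ++ tau q) -> Dx x = Dx x'.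
Proof.
move=> ES H. apply/ffunP => q; rewrite !ffunE -ES; case: ifP => Hq //.
have Hne : [seq tau q | q <- enum (Sb x)] != [::].
  apply/eqP => E. have : tau q \in [seq tau q | q <- enum (Sb x)] by apply: map_f; rewrite mem_enum.
  by rewrite E.
have EL : Lx x = L ++ lcps [seq tau q | q <- enum (Sb x)].
  rewrite /Lx -lcps_cat // -map_comp. congr lcps. apply/eq_in_map => p; rewrite mem_enum => Hp.
  exact: (H p Hp).1.
have EL' : Lx x' = L' ++ lcps [seq tau q | q <- enum (Sb x)].
  rewrite /Lx -lcps_cat // -map_comp -ES. congr lcps. apply/eq_in_map => p; rewrite mem_enum => Hp.
  exact: (H p Hp).2.
by rewrite EL EL' (H q Hq).1 (H q Hq).2 !size_cat !drop_catD.
Qed.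

Lemma Sb_tc y v v' : trans_congr (delta T2) v v' -> Sb (y ++ v) = Sb (y ++ v').
Proof.
move=> H. apply/setP => q. apply/idP/idP => /inSb [Hc [o Hr]]; apply/inSb; split=>//.
- have [q0 [H0 /has_run_cat [r [h1 h2]]]] := reach_has Hr.
  apply: (has_reach H0). apply/has_run_cat; exists r; split=>//; by apply/H.
- have [q0 [H0 /has_run_cat [r [h1 h2]]]] := reach_has Hr.
  apply: (has_reach H0). apply/has_run_cat; exists r; split=>//; by apply/H.
Qed.

Lemma shift3 (r B1 B2 B B1' B2' B' : seq Sigma) c c2 :
  B1 ++ r = r ++ B1' -> B2 ++ r = r ++ B2' -> B ++ r = r ++ B' ->
  r ++ (wpow B1' c ++ wpow B2' c2 ++ B') = (wpow B1 c ++ wpow B2 c2 ++ B) ++ r.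
Proof.
move=> h1 h2 h3. rewrite -!catA h3.
rewrite [wpow B2 c2 ++ (r ++ B')]catA (wpow_comm c2 h2) -catA.
by rewrite [wpow B1 c ++ (r ++ _)]catA (wpow_comm c h1) -!catA.
Qed.
Lemma core (A2 : aperiodic_trans T2) :
  exists M0, forall y u, Dx (y ++ wpow u M0) = Dx (y ++ wpow u M0.+1).
Proof.
case: A2 => N0 HN0.
have HN0' := tc_pow HN0.
set N := N0.+1.
have HN : forall w m, N <= m -> trans_congr (delta T2) (wpow w m) (wpow w N).
  move=> w m hm. apply: tc_trans (HN0' w m _) (tc_sym (HN0' w N _)); rewrite /N; lia.
set Tt := #|{ffun Q2 -> Q2}|.
set m1 := N + Tt. set A := Tt * N.
exists (m1 + A.+1 * A.+1) => y u. set m := m1 + A.+1 * A.+1.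
set S := Sb (y ++ wpow u m1).
have HS : forall k, N <= k -> Sb (y ++ wpow u k) = S.
  move=> k hk. rewrite /S (Sb_tc y (HN u k hk)) (Sb_tc y (HN u m1 _)) //; rewrite /m1; lia.
pose Pst q (st : nat -> Q2) := (exists q0, q0 \in init T2 /\ has_run (delta T2) q0 y (st 0)) /\
   st m1 = q /\ forall i, i < m1 -> has_run (delta T2) (st i) u (st i.+1).
pose stq (q : Q2) := epsilon (inhabits (fun _ : nat => q)) (Pst q).
have Hst : forall q, q \in S -> Pst q (stq q).
  move=> q Hq. apply: epsilon_spec.
  have [q0 [H0 /has_run_cat [r [h1 h2]]]] := reach_has (Rx_reach Hq).
  have [st [E0 [Em Hi]]] := has_run_pow_path h2.
  exists st; split; last by split.
  exists q0; by rewrite E0.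
pose sig (i : 'I_Tt.+1) := [ffun q => stq q i].
have [i [j [hij [hjT Eij]]]] : exists i j, i < j /\ j <= Tt /\ forall q, stq q i = stq q j.
  have Hni : ~ injective sig.
    move/leq_card. rewrite card_ord -/Tt. lia.
  have [i0 [j0 [E N0ij]]] : exists i0 j0, sig i0 = sig j0 /\ i0 != j0.
    apply: NNPP => Hn; apply: Hni => i0 j0 E. apply/eqP; apply: NNPP => Hne.
    apply: Hn; exists i0, j0; split=>//; exact/negP.
  have Eq : forall q, stq q i0 = stq q j0.
    move=> q. have := congr1 (fun g : {ffun Q2 -> Q2} => g q) E. by rewrite /sig !ffunE.
  case: (ltngtP i0 j0) => h.
  - exists i0, j0; split=>//; split=>//. by rewrite -ltnS ltn_ord.
  - exists j0, i0; split=>//; split; first by rewrite -ltnS ltn_ord. by move=> q; rewrite Eq.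
  - by move: N0ij; rewrite (val_inj h) eqxx.
set l := j - i. set a := l * N.
have hl : 0 < l by rewrite /l subn_gt0.
have hNa : N <= a by rewrite /a leq_pmull.
have haA : a <= A by rewrite /a /A leq_mul2r; apply/orP; right; rewrite /l; lia.
have hjm1 : j <= m1 by rewrite /m1; lia.
have hNpos : 0 < N by [].
have hapos : 0 < a by lia.
have Hsq : forall q, q \in S -> coacc q by move=> q /inSb [].
have Hloop : forall q, q \in S -> has_run (delta T2) (stq q i) (wpow u l) (stq q i).
  move=> q Hq. have [_ [Em Hi]] := Hst q Hq.
  have := path_run Hi (ltnW hij) hjm1. by rewrite -Eij.
have Hsuf : forall q, q \in S -> has_run (delta T2) (stq q i) (wpow u (m1 - j)) q.
  move=> q Hq. have [_ [Em Hi]] := Hst q Hq.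
  have := path_run Hi hjm1 (leqnn _). by rewrite Em -Eij.
have Hcs : forall q, q \in S -> coacc (stq q i).
  move=> q Hq. exact: coacc_back (Hsuf q Hq) (Hsq q Hq).
have Hpref : forall q, q \in S -> stq q i \in Sb (y ++ wpow u i).
  move=> q Hq. have [[q0 [H0 Hy]] [Em Hi]] := Hst q Hq.
  have := path_run Hi (leq0n i) (leq_trans (ltnW hij) hjm1). rewrite subn0 => Hp.
  apply/inSb; split; first exact: Hcs.
  apply: (has_reach H0). apply/has_run_cat; by exists (stq q 0).
have HloopA : forall q, q \in S -> has_run (delta T2) (stq q i) (wpow u a) (stq q i).
  move=> q Hq. exact: has_run_loop_iter (Hloop q Hq).
have HloopB : forall q, q \in S -> has_run (delta T2) (stq q i) (wpow u a.+1) (stq q i).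
  move=> q Hq. apply/(HN u a.+1 (leq_trans hNa (leqnSn _))). apply/(HN u a hNa). exact: HloopA.
pose be1 (q : Q2) := epsilon (inhabits [::]) (run_out T2 (stq q i) (wpow u a) (stq q i)).
pose be2 (q : Q2) := epsilon (inhabits [::]) (run_out T2 (stq q i) (wpow u a.+1) (stq q i)).
pose ga (q : Q2) := epsilon (inhabits [::]) (run_out T2 (stq q i) (wpow u (m1 - j)) q).
pose al (q : Q2) := Rx (y ++ wpow u i) (stq q i).
have Hbe1 : forall q, q \in S -> run_out T2 (stq q i) (wpow u a) (stq q i) (be1 q).
  move=> q Hq. apply: epsilon_spec. exact/has_runE/HloopA.
have Hbe2 : forall q, q \in S -> run_out T2 (stq q i) (wpow u a.+1) (stq q i) (be2 q).
  move=> q Hq. apply: epsilon_spec. exact/has_runE/HloopB.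
have Hga : forall q, q \in S -> run_out T2 (stq q i) (wpow u (m1 - j)) q (ga q).
  move=> q Hq. apply: epsilon_spec. exact/has_runE/Hsuf.
have Pump : forall q k L, q \in S -> run_out T2 (stq q i) (wpow u k) (stq q i) L ->
    reach (y ++ wpow u (i + k + (m1 - j))) q (al q ++ L ++ ga q).
  move=> q k L Hq HL. rewrite !wpowD -!catA catA.
  apply/reach_cat. exists (stq q i), (al q), (L ++ ga q); split; first exact: Rx_reach (Hpref q Hq).
  split=>//. apply/run_out_cat; exists (stq q i), L, (ga q); split=>//; split=>//; exact: Hga.
have Fam : forall k (B : Q2 -> seq Sigma), (forall q, q \in S -> run_out T2 (stq q i) (wpow u k) (stq q i) (B q)) ->
    forall q q', q \in S -> q' \in S -> forall c, exists o,
      close C (al q ++ wpow (B q) c ++ ga q) o /\ close C (al q' ++ wpow (B q') c ++ ga q') o.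
  move=> k B HB q q' Hq Hq' c.
  have [o1 [P1 C1]] := closeT1 (Hsq q Hq) (Pump q _ _ Hq (run_loop_iter c (HB q Hq))).
  have [o2 [P2 C2]] := closeT1 (Hsq q' Hq') (Pump q' _ _ Hq' (run_loop_iter c (HB q' Hq'))).
  exists o1; split=>//. by rewrite (T1pre_uniq P1 P2).
set b := i + (m1 - j).
set n := m - b - a.
have hbm1 : b <= m1 by rewrite /b; lia.
have hAA : a * a <= A * A by apply: leq_mul.
have hn : a * a <= n.
  rewrite /n /m. have : A.+1 * A.+1 = A * A + A + A + 1 by rewrite mulSn mulnS; lia. lia.
set c2 := n %% a. set d := n %/ a. set c := d - c2.
have hc2 : c2 < a by rewrite /c2 ltn_mod.
have hda : a <= d by rewrite /d leq_divRL.
have Edn : n = d * a + c2 by rewrite /d /c2 -divn_eq.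
have E1 : a * c + a * c2 = a * d by rewrite -mulnDr /c subnK //; lia.
have Em : i + (a * c + a.+1 * c2 + a) + (m1 - j) = m.
  rewrite mulSn. have : b + n + a = m by rewrite /n /m; lia. rewrite /b; lia.
have Em1 : i + (a * c + a.+1 * c2 + a.+1) + (m1 - j) = m.+1.
  rewrite mulSn. have : b + n + a = m by rewrite /n /m; lia. rewrite /b; lia.
pose Lm (q : Q2) := wpow (be1 q) c ++ wpow (be2 q) c2 ++ be1 q.
pose Lm' (q : Q2) := wpow (be1 q) c ++ wpow (be2 q) c2 ++ be2 q.
have HRm : forall q, q \in S -> Rx (y ++ wpow u m) q = al q ++ Lm q ++ ga q.
  move=> q Hq. apply: Rx_eq (Hsq q Hq) _. rewrite -Em. refine (Pump q _ _ Hq _).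
  rewrite /Lm catA. apply: run_loop_cat; [|exact: Hbe1 q Hq].
  apply: run_loop_cat; [exact: run_loop_iter (Hbe1 q Hq) | exact: run_loop_iter (Hbe2 q Hq)].
have HRm1 : forall q, q \in S -> Rx (y ++ wpow u m.+1) q = al q ++ Lm' q ++ ga q.
  move=> q Hq. apply: Rx_eq (Hsq q Hq) _. rewrite -Em1. refine (Pump q _ _ Hq _).
  rewrite /Lm' catA. apply: run_loop_cat; [|exact: Hbe2 q Hq].
  apply: run_loop_cat; [exact: run_loop_iter (Hbe1 q Hq) | exact: run_loop_iter (Hbe2 q Hq)].
have ESm : Sb (y ++ wpow u m) = S by apply: HS; rewrite /m /m1; lia.
have ESm1 : Sb (y ++ wpow u m.+1) = S by apply: HS; rewrite /m /m1; lia.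
have FamA := Fam _ _ Hbe1. have FamB := Fam _ _ Hbe2.
case: (classic (exists q, q \in S /\ (be1 q != [::] \/ be2 q != [::]))) => Hex; last first.
  apply: (@Dx_eq _ _ [::] [::] (fun q => al q ++ ga q)); first by rewrite ESm ESm1.
  rewrite ESm => q Hq.
  have [E1' E2'] : be1 q = [::] /\ be2 q = [::].
    split; apply/eqP; apply: NNPP => Hn; apply: Hex; exists q; split=>//; [left|right]; exact/negP.
  rewrite HRm // HRm1 // /Lm /Lm' E1' E2' !wpow_nil. done.
case: Hex => q1 [Hq1 Hne].
have Sz1 : forall q, q \in S -> size (be1 q) = size (be1 q1) by move=> q Hq; have [->] := CL (FamA q q1 Hq Hq1).
have Sz2 : forall q, q \in S -> size (be2 q) = size (be2 q1) by move=> q Hq; have [->] := CL (FamB q q1 Hq Hq1).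
have Hcomp : forall q q', q \in S -> q' \in S -> prefix (al q) (al q') \/ prefix (al q') (al q).
  move=> q q' Hq Hq'. case: Hne => Hn.
  - have [_ [H _]] := CL (FamA q q' Hq Hq'). apply: H. by rewrite -size_eq0 Sz1 // size_eq0.
  - have [_ [H _]] := CL (FamB q q' Hq Hq'). apply: H. by rewrite -size_eq0 Sz2 // size_eq0.
case: (arg_minnP (fun q => size (al q)) Hq1) => q0 Hq0 Hmin.
have Hpre : forall q, q \in S -> prefix (al q0) (al q).
  move=> q Hq. case: (Hcomp q0 q Hq0 Hq) => // Hp.
  have Hs := Hmin q Hq. have Hs' := prefix_size Hp.
  have : size (al q) = size (al q0) by apply/eqP; rewrite eqn_leq Hs Hs'.
  move: Hp; rewrite prefixE => /eqP Ht Esz. rewrite Esz take_size in Ht. by rewrite Ht prefix_refl.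
pose rho (q : Q2) := drop (size (al q0)) (al q).
have Eal : forall q, q \in S -> al q = al q0 ++ rho q by move=> q Hq; rewrite prefix_cat_drop // Hpre.
have Comm : forall (B : Q2 -> seq Sigma) k, (forall q, q \in S -> run_out T2 (stq q i) (wpow u k) (stq q i) (B q)) ->
    forall q, q \in S -> B q0 ++ rho q = rho q ++ B q.
  move=> B k HB q Hq. have [Hsz [_ H3]] := CL (Fam _ _ HB q0 q Hq0 Hq).
  case: (eqVneq (B q0) [::]) => HB0.
  - have : B q = [::] by apply/eqP; rewrite -size_eq0 -Hsz HB0.
    by move=> ->; rewrite HB0 cats0.
  - apply: H3 => //. by rewrite -Eal.
have C1 := Comm _ _ Hbe1. have C2 := Comm _ _ Hbe2.
apply: (@Dx_eq _ _ (al q0 ++ Lm q0) (al q0 ++ Lm' q0) (fun q => rho q ++ ga q)); first by rewrite ESm ESm1.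
rewrite ESm => q Hq. rewrite HRm // HRm1 // (Eal q Hq) /Lm /Lm'.
have Ea := congr1 (fun s => al q0 ++ s ++ ga q) (shift3 c c2 (C1 q Hq) (C2 q Hq) (C1 q Hq)).
have Eb := congr1 (fun s => al q0 ++ s ++ ga q) (shift3 c c2 (C1 q Hq) (C2 q Hq) (C2 q Hq)).
move: Ea Eb => /= Ea Eb. rewrite -!catA in Ea Eb. rewrite -!catA. by split.
Qed.
Lemma Tn_has_run y u D : has_run (delta Tn) (Dx y) u D <-> D = Dx (y ++ u).
Proof.
split.
- by case/has_runE=> w /run_Tn [].
- move=> ->; apply/has_runE; exact: run_Tn_ex.
Qed.

Lemma Tn_unreach p u q : ~ (exists y, p = Dx y) -> u != [::] -> ~ has_run (delta Tn) p u q.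
Proof.
case: u => [|a u] // hp _ /= [p' [H _]]. move: H; rewrite inE /= => /andP [/decPP H _]. apply: hp.
by case: H => y ->; exists y.
Qed.

Lemma Tn_aperiodic (A2 : aperiodic_trans T2) : aperiodic_trans Tn.
Proof.
have [M0 HM] := core A2. exists M0.+1 => w p q.
case: (eqVneq w [::]) => [->|hw]; first by rewrite !wpow_nil.
case: (classic (exists y, p = Dx y)) => [[y ->]|hp].
- have E : Dx (y ++ wpow w M0.+1) = Dx (y ++ wpow w M0.+2).
    have := HM (y ++ w) w. by rewrite -!catA -!wpowS.
  by rewrite !Tn_has_run E.
- have hne : forall k, wpow w k.+1 != [::].
    move=> k; rewrite wpowS; by case: (w) hw.
  split => H; exfalso; exact: Tn_unreach hp (hne _) H.
Qed.

End Main.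

Theorem theorem2p4 (Sigma : finType) (f : seq Sigma -> option (seq Sigma)) :
  sequential_fun f -> (Ap_sequential f <-> Ap_rational f).
Proof.
case=> Q1 [T1 [D1 R1]]. split.
- case=> Q [T [Hd [Ha Hr]]]. exists Q, T; split; [exact: det_functional | by split].
- case=> Q2 [T2 [Hf [Ha Hr]]]. exists _, (Tn T1 T2).
  split; first exact: Tn_det.
  split; [exact: Tn_aperiodic | exact: Tn_realizes].
Qed.
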